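(* There is a function $f:(0,\infty)\to[0,1]$ with $\lim_{r\to\infty}r^{c}f(r)=0$ for every $c>0$ such that the following holds. For every common knowledge distinguishing debate game $(A,S,P,C_w,C_l)$ and all positive integers $m,n$ with $|C_l(s)|\le n$ and $|C_w(s)|\ge m$ for all $s\in S$, there is a policy whose error is at most $f(m/n)$.
   Context: Let $\delta$ be a special default action. A CKDDG is a tuple $(A,S,P,C_w,C_l)$ with $A$ finite, $\delta\notin A$, $S$ finite, $P$ a probability mass function on $S$, and $C_w,C_l:S\to\mathcal P(A)$. A policy is $M:\{1,2\}\times(A\cup\{\delta\})^2\to[0,1]$ with $M(1,a_1,a_2)+M(2,a_1,a_2)=1$. For $j\in\{1,2\}$ and $s\in S$, $w^i_M((j,s))$ is the value to agent $i$ of the zero-sum game with payoff matrix $M(i,\cdot,\cdot)$ in which agent $j$ chooses from $C_w(s)\cup\{\delta\}$ and the other agent chooses from $C_l(s)\cup\{\delta\}$. The error is $\mathbb E_{s\sim P}\left[\frac{w^1_M((2,s))+w^2_M((1,s))}{2}\right]$. *)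

(* Defs.v *)
From HB Require Import structures.
From mathcomp Require Import all_boot all_order all_algebra.
From mathcomp Require Import all_classical all_reals all_analysis.
Set Implicit Arguments. Unset Strict Implicit. Unset Printing Implicit Defensive.
Import Order.TTheory GRing.Theory Num.Theory.
Local Open Scope ring_scope.
Local Open Scope classical_set_scope.

Inductive agent := Ag1 | Ag2.
Definition other (i : agent) : agent := if i is Ag1 then Ag2 else Ag1.

Section CKDDG.
Variable R : realType.
Variable A : finType.
(* Actions are [option A]: [None] is the special default action delta,
   [Some a] is the action a in A (so delta is not in A by construction). *)

Definition is_pmf (S : finType) (P : S -> R) : Prop :=
  (forall s, 0 <= P s) /\ \sum_(s : S) P s = 1.

Definition is_policy (M : agent -> option A -> option A -> R) : Prop :=
  (forall i a1 a2, 0 <= M i a1 a2 <= 1) /\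
  (forall a1 a2, M Ag1 a1 a2 + M Ag2 a1 a2 = 1).

Definition mixed (X : {set option A}) (x : option A -> R) : Prop :=
  (forall a, 0 <= x a) /\ (forall a, a \notin X -> x a = 0) /\
  \sum_(a : option A) x a = 1.

Definition payoff (M : agent -> option A -> option A -> R) (i : agent)
  (x1 x2 : option A -> R) : R :=
  \sum_(a1 : option A) \sum_(a2 : option A) x1 a1 * x2 a2 * M i a1 a2.

Definition game_value (M : agent -> option A -> option A -> R) (i : agent)
  (X1 X2 : {set option A}) : R :=
  let Xi := if i is Ag1 then X1 else X2 in
  let Xo := if i is Ag1 then X2 else X1 in
  sup [set v | exists x, mixed Xi x /\
        v = inf [set u | exists y, mixed Xo y /\
              u = (if i is Ag1 then payoff M i x y else payoff M i y x)]].

(* w^i_M((j,s)): agent j chooses from C_w(s) u {delta}, the other agent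
   from C_l(s) u {delta}. *)
Definition wval (S : finType) (Cw Cl : S -> {set A})
  (M : agent -> option A -> option A -> R) (i j : agent) (s : S) : R :=
  let W := (Some @: Cw s) :|: [set None] in
  let L := (Some @: Cl s) :|: [set None] in
  if j is Ag1 then game_value M i W L else game_value M i L W.

Definition error (S : finType) (P : S -> R) (Cw Cl : S -> {set A})
  (M : agent -> option A -> option A -> R) : R :=
  \sum_(s : S) P s * ((wval Cw Cl M Ag1 Ag2 s + wval Cw Cl M Ag2 Ag1 s) / 2).

End CKDDG.

(* Main.v *)
Require Import Defs.
From HB Require Import structures.
From mathcomp Require Import all_boot all_order all_algebra.
From mathcomp Require Import all_classical all_reals all_analysis.
From mathcomp Require Import lra zify ring.
Set Implicit Arguments. Unset Strict Implicit. Unset Printing Implicit Defensive.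
Import Order.TTheory GRing.Theory Num.Theory.

Module PartA.
Local Open Scope ring_scope.
Local Open Scope classical_set_scope.

Section GV.
Variables (R : realType) (A : finType).
Implicit Types (M : agent -> option A -> option A -> R) (X : {set option A}).

Definition pm (a : option A) : option A -> R := fun c => if c == a then 1 else 0.

Lemma pm_mixed X a : a \in X -> mixed X (pm a).
Proof.
move=> aX; split; first by move=> c; rewrite /pm; case: eqP.
split; first by move=> c cX; rewrite /pm; case: eqP => // ca; rewrite ca aX in cX.
by rewrite (bigD1 a) //= /pm eqxx big1 ?addr0 // => c /negPf ->.
Qed.

Lemma payoff_bounds M i x y X1 X2 : is_policy M -> mixed X1 x -> mixed X2 y ->
  0 <= payoff M i x y <= 1.
Proof.
move=> [HM _] [x0 [_ x1]] [y0 [_ y1]]; apply/andP; split.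
  apply: sumr_ge0 => a _; apply: sumr_ge0 => b _.
  by rewrite !mulr_ge0 //; case/andP: (HM i a b).
apply: (@le_trans _ _ (\sum_a \sum_b x a * y b)).
  apply: ler_sum => a _; apply: ler_sum => b _.
  by rewrite -[leRHS]mulr1 ler_wpM2l ?mulr_ge0 //; case/andP: (HM i a b).
rewrite (eq_bigr (fun a => x a * \sum_b y b)); last by move=> a _; rewrite mulr_sumr.
by rewrite -mulr_suml x1 y1 mul1r.
Qed.

Lemma inf_payoff_le (y0 : option A -> R) Xo (F : (option A -> R) -> R) :
  mixed Xo y0 -> (forall y, mixed Xo y -> 0 <= F y) ->
  inf [set u | exists y, mixed Xo y /\ u = F y] <= F y0.
Proof.
move=> my0 F0; apply: ge_inf; last by exists y0.
by exists 0 => u [y [my ->]]; exact: F0.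
Qed.


Lemma gv_le1 M i X1 X2 : is_policy M -> None \in X1 -> None \in X2 ->
  game_value M i X1 X2 <= 1.
Proof.
move=> HM n1 n2; case: i; rewrite /game_value /=.
- apply: ge_sup.
    by eexists; exists (pm None); split; [exact: pm_mixed|reflexivity].
  move=> v [x [mx ->]].
  apply: le_trans (inf_payoff_le (pm_mixed n2) _) _.
    by move=> y my; case/andP: (payoff_bounds Ag1 HM mx my).
  by case/andP: (payoff_bounds Ag1 HM mx (pm_mixed n2)).
- apply: ge_sup.
    by eexists; exists (pm None); split; [exact: pm_mixed|reflexivity].
  move=> v [x [mx ->]].
  apply: le_trans (inf_payoff_le (pm_mixed n1) _) _.
    by move=> y my; case/andP: (payoff_bounds Ag2 HM my mx).
  by case/andP: (payoff_bounds Ag2 HM (pm_mixed n1) mx).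
Qed.

Lemma payoff_pm_r M i x a : payoff M i x (pm a) = \sum_b x b * M i b a.
Proof.
apply: eq_bigr => b _; rewrite (bigD1 a) //= /pm eqxx mulr1 big1 ?addr0 //.
by move=> c /negPf ->; rewrite mulr0 mul0r.
Qed.

Lemma payoff_pm_l M i x a : payoff M i (pm a) x = \sum_b x b * M i a b.
Proof.
rewrite /payoff (bigD1 a) //= [X in _ + X]big1 ?addr0; last first.
  by move=> c /negPf ca; apply: big1 => b _; rewrite /pm ca !mul0r.
by apply: eq_bigr => b _; rewrite /pm eqxx mul1r.
Qed.

Lemma gv1_le0 M X1 X2 a : is_policy M -> None \in X1 -> a \in X2 ->
  (forall b, b \in X1 -> M Ag1 b a = 0) -> game_value M Ag1 X1 X2 <= 0.
Proof.
move=> HM n1 aX2 Hb; rewrite /game_value /=; apply: ge_sup.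
  by eexists; exists (pm None); split; [exact: pm_mixed|reflexivity].
move=> v [x [mx ->]].
apply: le_trans (inf_payoff_le (pm_mixed aX2) _) _.
  by move=> y my; case/andP: (payoff_bounds Ag1 HM mx my).
rewrite payoff_pm_r big1 // => b _; case: mx => _ [xo _].
by case: (boolP (b \in X1)) => bX; [rewrite Hb // mulr0| rewrite xo // mul0r].
Qed.

Lemma gv2_le0 M X1 X2 a : is_policy M -> None \in X2 -> a \in X1 ->
  (forall b, b \in X2 -> M Ag2 a b = 0) -> game_value M Ag2 X1 X2 <= 0.
Proof.
move=> HM n2 aX1 Hb; rewrite /game_value /=; apply: ge_sup.
  by eexists; exists (pm None); split; [exact: pm_mixed|reflexivity].
move=> v [x [mx ->]].
apply: le_trans (inf_payoff_le (pm_mixed aX1) _) _.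
  by move=> y my; case/andP: (payoff_bounds Ag2 HM my mx).
rewrite payoff_pm_l big1 // => b _; case: mx => _ [xo _].
by case: (boolP (b \in X2)) => bX; [rewrite Hb // mulr0| rewrite xo // mul0r].
Qed.

End GV.

End PartA.
Import PartA.

Module PartB.
Local Open Scope ring_scope.

Section Resample.
Variables (R : realType) (I X : finType) (mu0 : X -> R).
Definition mu (d : {ffun I -> X}) := \prod_i mu0 (d i).
Definition upd (d : {ffun I -> X}) a x : {ffun I -> X} :=
  [ffun i => if i == a then x else d i].

Lemma updK d a x : upd (upd d a x) a (d a) = d.
Proof. by apply/ffunP => i; rewrite !ffunE; case: eqP => // ->. Qed.

Lemma upd_eq d a x : upd d a x a = x.
Proof. by rewrite ffunE eqxx. Qed.

Lemma upd_neq d a x i : i != a -> upd d a x i = d i.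
Proof. by rewrite ffunE => /negPf ->. Qed.

Lemma mu_upd d a x : mu (upd d a x) * mu0 (d a) = mu d * mu0 x.
Proof.
rewrite /mu (bigD1 a) //= [in RHS](bigD1 a) //= upd_eq.
rewrite (eq_bigr (fun i => mu0 (d i))); last by move=> i ia; rewrite upd_neq.
by rewrite mulrC mulrA [RHS]mulrC mulrA [_ * mu0 x]mulrC.
Qed.

Hypothesis S1 : \sum_x mu0 x = 1.

Lemma resample a (H : {ffun I -> X} -> R) :
  \sum_d mu d * H d = \sum_d mu d * \sum_x mu0 x * H (upd d a x).
Proof.
transitivity (\sum_d \sum_x mu d * mu0 x * H d).
  apply: eq_bigr => d _.
  have -> : mu d * H d = mu d * H d * \sum_x mu0 x by rewrite S1 mulr1.
  by rewrite mulr_sumr; apply: eq_bigr => x _; rewrite mulrAC.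
transitivity (\sum_d \sum_x mu d * mu0 x * H (upd d a x)); last first.
  by apply: eq_bigr => d _; rewrite mulr_sumr; apply: eq_bigr => x _; rewrite mulrA.
rewrite !pair_bigA /=.
pose sig (p : {ffun I -> X} * X) := (upd p.1 a p.2, p.1 a).
have sigK : involutive sig by case=> d x; rewrite /sig /= updK upd_eq.
rewrite (reindex_inj (inv_inj sigK)) /=.
by apply: eq_bigr => -[d x] _ /=; rewrite mu_upd.
Qed.

Lemma resample_seq (s : seq I) (phi : I -> X -> {ffun I -> X} -> R)
    (g : {ffun I -> X} -> R) : uniq s ->
  (forall a a' x y d, a' \in s -> phi a y (upd d a' x) = phi a y d) ->
  (forall a' x d, a' \in s -> g (upd d a' x) = g d) ->
  \sum_d mu d * (g d * \prod_(a <- s) phi a (d a) d) =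
  \sum_d mu d * (g d * \prod_(a <- s) \sum_x mu0 x * phi a x d).
Proof.
elim: s g => [|a s IH] g /=.
  by move=> *; apply: eq_bigr => d _; rewrite !big_nil.
case/andP=> as_ us Hphi Hg.
rewrite (resample a).
transitivity (\sum_d mu d * ((g d * \sum_x mu0 x * phi a x d) *
   \prod_(a0 <- s) phi a0 (d a0) d)).
  apply: eq_bigr => d _; congr (_ * _).
  rewrite mulr_sumr mulr_suml; apply: eq_bigr => x _.
  rewrite big_cons Hg ?mem_head // upd_eq Hphi ?mem_head //.
  have -> : \prod_(a0 <- s) phi a0 (upd d a x a0) (upd d a x) =
            \prod_(a0 <- s) phi a0 (d a0) d.
    rewrite big_seq_cond [RHS]big_seq_cond; apply: eq_bigr => a0 /andP[a0s _].
    rewrite upd_neq; last by apply: contraNneq as_ => <-.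
    by rewrite Hphi ?mem_head.
  by rewrite !mulrA [_ * g d]mulrC.
rewrite IH //.
- apply: eq_bigr => d _; rewrite big_cons; congr (_ * _); by rewrite mulrA.
- by move=> a0 a' x y d a's; apply: Hphi; rewrite inE a's orbT.
- move=> a' x d a's; rewrite Hg ?inE ?a's ?orbT //; congr (_ * _).
  by apply: eq_bigr => y _; rewrite Hphi // inE a's orbT.
Qed.

End Resample.

Lemma sum_mu_prod (R : realType) (I X : finType) (mu0 : X -> R) (F : I -> X -> R) :
  \sum_d mu mu0 d * \prod_i F i (d i) = \prod_i \sum_x mu0 x * F i x.
Proof.
rewrite bigA_distr_bigA; apply: eq_bigr => d _; rewrite /mu -big_split /=.
by [].
Qed.

Lemma count_ffun (A : finType) (R : realType) (S : {set A}) (c : A -> bool) :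
  \sum_(h : {ffun A -> bool}) ([forall b in S, h b == c b])%:R = (2 ^+ #|~: S| : R).
Proof.
transitivity (\sum_(h : {ffun A -> bool})
   \prod_b (if b \in S then ((h b == c b)%:R : R) else 1)).
  apply: eq_bigr => h _; case: forallP => [H|H].
    by rewrite big1 // => b _; case: ifP => // bS; move: (H b); rewrite bS /= => ->.
  have [b Hb] : exists b, ~~ ((b \in S) ==> (h b == c b)).
    by apply/existsP; rewrite -negb_forall; apply/forallP.
  move: Hb; rewrite negb_imply => /andP[bS /negPf hb].
  by rewrite (bigD1 b) //= bS hb mul0r.
rewrite -(bigA_distr_bigA (fun b (be : bool) => if b \in S then ((be == c b)%:R : R) else 1)).
transitivity (\prod_(b : A) (if b \in ~: S then 2 else 1 : R)).
  apply: eq_bigr => b _; rewrite big_bool !inE; case: (b \in S) => /=.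
    by case: (c b); rewrite /= ?addr0 ?add0r.
  by rewrite -[1 + 1]/(1%:R + 1%:R) -natrD.
by rewrite -big_mkcond prodr_const.
Qed.

Section Model.
Variables (R : realType) (A : finType) (p : R).
Definition X := (bool * {ffun A -> bool})%type.
Definition mu0 (x : X) : R := (if x.1 then p else 1 - p) / (2 ^+ #|A|).

Lemma sum_pair (F : X -> R) : \sum_x F x = \sum_(e : bool) \sum_(h : {ffun A -> bool}) F (e, h).
Proof. by rewrite pair_bigA; apply: eq_bigr => -[]. Qed.

Lemma two_pow_neq0 k : (2 ^+ k : R) != 0.
Proof. by rewrite expf_neq0 // pnatr_eq0. Qed.

Lemma sum_const_ffun (c : R) : \sum_(h : {ffun A -> bool}) c = c *+ (2 ^ #|A|).
Proof.
rewrite (eq_bigl (fun h => h \in predT)) //.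
rewrite sumr_const.
have -> : #|@predT {ffun A -> bool}| = (2 ^ #|A|)%N by rewrite card_ffun card_bool.
by [].
Qed.

Lemma sum_mu0_bool (F : bool -> R) : \sum_x mu0 x * F x.1 = p * F true + (1 - p) * F false.
Proof.
rewrite sum_pair big_bool /mu0 /= !sum_const_ffun -[p / _ * _ *+ _]mulr_natr -[(1 - p) / _ * _ *+ _]mulr_natr natrX.
by rewrite [p / _ * _ * _]mulrAC [(1 - p) / _ * _ * _]mulrAC !divfK ?two_pow_neq0.
Qed.
Lemma sum_mu0 : \sum_x mu0 x = 1.
Proof.
have := sum_mu0_bool (fun _ => 1); rewrite !mulr1 addrC subrK => <-.
by apply: eq_bigr => x _; rewrite mulr1.
Qed.

Definition rk (a : A) : nat := enum_rank a.
Definition Dx (a b : A) (xa xb : X) : bool := xa.2 b (+) xb.2 a (+) (rk a < rk b)%N.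
Definition Gx (L : {set A}) (a : A) (x : X) (d : {ffun A -> X}) : bool :=
  x.1 && [forall b in L, (d b).1 ==> Dx a b x (d b)].
Definition LE (L : {set A}) (d : {ffun A -> X}) : {set A} := [set b in L | (d b).1].

Lemma sum_G L a d : \sum_x mu0 x * (Gx L a x d)%:R = p / 2 ^+ #|LE L d|.
Proof.
rewrite sum_pair big_bool /mu0 /Gx /=.
rewrite [X in _ + X]big1 ?addr0; last by move=> h _; rewrite mulr0.
rewrite -mulr_sumr.
rewrite (eq_bigr (fun h : {ffun A -> bool} =>
   ([forall b in LE L d, h b == ~~ ((d b).2 a (+) (rk a < rk b)%N)])%:R : R)); last first.
  move=> h _; congr ((nat_of_bool _) %:R).
  apply: eq_forallb => b; rewrite /LE inE /Dx /=;
  by case: (b \in L); case: (d b).1; case: (h b); case: ((d b).2 a); case: (rk a < rk b)%N.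
rewrite count_ffun -(cardsC (LE L d)) exprD invfM mulrA divfK ?two_pow_neq0 //.
Qed.

Lemma psi_val L a d : \sum_x mu0 x * (1 - (Gx L a x d)%:R) = 1 - p / 2 ^+ #|LE L d|.
Proof.
rewrite (eq_bigr (fun x => mu0 x - mu0 x * (Gx L a x d)%:R)); last first.
  by move=> x _; rewrite mulrBr mulr1.
by rewrite sumrB sum_mu0 sum_G.
Qed.

Lemma expect_prod (L W : {set A}) : (forall a, a \in W -> a \notin L) ->
  \sum_d mu mu0 d * \prod_(a in W) (1 - (Gx L a (d a) d)%:R) =
  \sum_d mu mu0 d * (1 - p / 2 ^+ #|LE L d|) ^+ #|W|.
Proof.
move=> dWL.
have := @resample_seq R A X mu0 sum_mu0 (enum W)
  (fun a x d => 1 - (Gx L a x d)%:R) (fun _ => 1) (enum_uniq W).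
rewrite /=; move=> H; rewrite (eq_bigr (fun d => mu mu0 d * (1 *
   \prod_(a <- enum W) (1 - (Gx L a (d a) d)%:R)))); last first.
  by move=> d _; rewrite mul1r big_enum.
rewrite H //; first last.
- move=> a a' x y d; rewrite mem_enum => a'W.
  congr (1 - (nat_of_bool _)%:R); rewrite /Gx; congr (_ && _).
  apply: eq_forallb => b; case bL: (b \in L) => //=.
  rewrite upd_neq //; apply/eqP => ba; move: (dWL _ a'W); by rewrite -ba bL.
- apply: eq_bigr => d _; rewrite mul1r big_enum /=.
  rewrite (eq_bigr (fun _ => 1 - p / 2 ^+ #|LE L d|)) ?prodr_const //.
  by move=> a _; rewrite psi_val.
Qed.

Lemma moment (L : {set A}) (t : R) :
  \sum_d mu mu0 d * t ^+ #|LE L d| = (1 - p + p * t) ^+ #|L|.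
Proof.
have E d : t ^+ #|LE L d| =
    \prod_b (fun b (x : X) => if b \in L then (if x.1 then t else 1) else 1) b (d b).
  rewrite -prodr_const big_mkcond /=; apply: eq_bigr => b _; rewrite /LE inE.
  by case: (b \in L); case: (d b).1.
under eq_bigr do rewrite E.
rewrite (sum_mu_prod mu0 (fun b (x : X) => if b \in L then (if x.1 then t else 1) else 1)).
rewrite -prodr_const [RHS]big_mkcond /=; apply: eq_bigr => b _.
have := sum_mu0_bool (fun e => if b \in L then (if e then t else 1) else 1).
move=> ->; case: (b \in L); rewrite ?mulr1.
  by rewrite addrC mulrC.
by rewrite addrC subrK.
Qed.
End Model.


End PartB.
Import PartB.

Module PartC.
Local Open Scope ring_scope.

Section Arith.
Variable R : realType.

Lemma two_gt0 n : 0 < (2:R) ^+ n.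
Proof. by rewrite exprn_gt0. Qed.

Lemma two_ge1 n : 1 <= (2:R) ^+ n.
Proof. by rewrite exprn_ege1 // ler1n. Qed.

Lemma div2_bounds (p : R) n : 0 <= p -> 0 <= p / 2 ^+ n <= p.
Proof.
move=> p0; apply/andP; split; first by apply: divr_ge0 => //; apply: ltW; exact: two_gt0.
by rewrite ler_pdivrMr ?two_gt0 // ler_peMr // two_ge1.
Qed.

Lemma div2_mono (p : R) k K : 0 <= p -> (k <= K)%N -> p / 2 ^+ K <= p / 2 ^+ k.
Proof.
move=> p0 kK; apply: ler_wpM2l => //.
rewrite lef_pV2 ?posrE ?two_gt0 //; apply: ler_weXn2l => //; by rewrite ler1n.
Qed.

Lemma pt_bound (p : R) (k K w : nat) : 0 <= p <= 1 ->
  (1 - p / 2 ^+ k) ^+ w <= (2 ^+ K) ^+ k / (2 ^+ K) ^+ K.+1 + (1 - p / 2 ^+ K) ^+ w.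
Proof.
case/andP => p0 p1.
have b01 n : 0 <= 1 - p / 2 ^+ n <= 1.
  by case/andP: (div2_bounds n p0) => h1 h2; apply/andP; split; lra.
case: (ltnP K k) => Kk.
- apply: ler_wpDr; first by apply: exprn_ge0; case/andP: (b01 K).
  apply: (@le_trans _ _ 1); first by case/andP: (b01 k) => ? ?; rewrite exprn_ile1.
  rewrite ler_pdivlMr ?exprn_gt0 ?two_gt0 // mul1r.
  by apply: ler_weXn2l => //; exact: two_ge1.
- apply: ler_wpDl; first by apply: divr_ge0; apply: exprn_ge0; apply: ltW; exact: two_gt0.
  apply: lerXn2r; rewrite ?nnegrE; [by case/andP: (b01 k)|by case/andP: (b01 K)|].
  by rewrite lerD2l lerN2 div2_mono.
Qed.


Lemma expR_ge2 : (2:R) <= expR 1.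
Proof. by have := @expR_ge1Dx R 1; rewrite -[1 + 1]/(1%:R + 1%:R) -natrD. Qed.

Lemma expR_nat_ge (j : nat) : (2:R) ^+ j <= expR j%:R.
Proof.
by rewrite -[j%:R]mulr1 expRM_natl; apply: lerXn2r; rewrite ?nnegrE ?expR_ge2 //.
Qed.

Lemma expRN_nat_le (j : nat) : expR (- j%:R) <= (2 ^+ j : R)^-1.
Proof.
rewrite expRN lef_pV2 ?posrE ?expR_gt0 ?two_gt0 //; exact: expR_nat_ge.
Qed.

Lemma pow4_ge (K : nat) : (K * K.+1 <= 4 ^ K)%N.
Proof.
elim: K => // K IH.
rewrite expnS.
have h : (K.+1 * K.+2 = K * K.+1 + 2 * K.+1)%N by ring.
rewrite h.
have : (2 * K.+1 <= 3 * 4 ^ K)%N.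
  elim: K {IH h} => // K IH'; rewrite expnS; lia.
lia.
Qed.

Lemma final_bound (p : R) (n m K Lc Wc : nat) : (0 < n)%N -> (Lc <= n)%N ->
  (n * 16 ^ K + n <= m)%N -> (m - n <= Wc)%N -> p = (n%:R * 2 ^+ K)^-1 ->
  (1 - p + p * 2 ^+ K) ^+ Lc / (2 ^+ K) ^+ K.+1 + (1 - p / 2 ^+ K) ^+ Wc <=
  (expR 1 + 1) / 2 ^+ (K * K.+1).
Proof.
move=> n0 Ln hm hW hp.
have nR : 0 < (n%:R : R) by rewrite ltr0n.
have p0 : 0 < p by rewrite hp invr_gt0 mulr_gt0 ?two_gt0.
have p2 : p * 2 ^+ K = n%:R^-1.
  by rewrite hp invfM -mulrA mulVf ?mulr1 // gt_eqF ?two_gt0.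
rewrite mulrDl; apply: lerD.
- rewrite -exprM; apply: ler_wpM2r; first by rewrite invr_ge0 ltW ?two_gt0.
  have hb1 : 1 <= 1 - p + p * 2 ^+ K.
    have : p <= p * 2 ^+ K by apply: ler_peMr; [exact: ltW | exact: two_ge1].
    lra.
  have hb2 : 1 - p + p * 2 ^+ K <= 1 + n%:R^-1 by rewrite p2; lra.
  apply: (@le_trans _ _ ((1 + n%:R^-1) ^+ Lc)).
    by apply: lerXn2r; rewrite ?nnegrE //; lra.
  apply: (@le_trans _ _ ((1 + n%:R^-1) ^+ n)).
    by apply: ler_weXn2l => //; lra.
  rewrite -[X in expR X](mulfV (lt0r_neq0 nR)) expRM_natl.
  by apply: lerXn2r; rewrite ?nnegrE ?expR_ge1Dx //.
- rewrite mul1r.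
  set q := p / 2 ^+ K.
  have q0 : 0 <= q by rewrite divr_ge0 ?ltW ?two_gt0.
  have q1 : q <= 1.
    have pp : p <= p * 2 ^+ K by apply: ler_peMr; [exact: ltW | exact: two_ge1].
    have n1 : n%:R^-1 <= (1:R) by rewrite invf_le1 // ler1n.
    have := div2_bounds K (ltW p0); rewrite -/q; move: pp; rewrite p2; lra.
  apply: (@le_trans _ _ ((1 - q) ^+ (n * 16 ^ K))).
    by apply: ler_wiXn2l; [lra | lra | lia].
  apply: (@le_trans _ _ (expR (- q) ^+ (n * 16 ^ K))).
    apply: lerXn2r; rewrite ?nnegrE; [lra | exact: ltW (expR_gt0 _) |].
    by have := expR_ge1Dx (- q); lra.
  rewrite -expRM_natl.
  have -> : (n * 16 ^ K)%:R * - q = - (4 ^ K)%:R.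
    rewrite /q hp natrM !natrX.
    have -> : (16 : R) ^+ K = 4 ^+ K * 2 ^+ K * 2 ^+ K.
      by rewrite -!exprMn; congr (_ ^+ _); rewrite -!natrM.
    field; apply/andP; split; rewrite ?gt_eqF ?two_gt0 //.
  apply: le_trans (expRN_nat_le _).
  by rewrite ler_expR lerN2 ler_nat pow4_ge.
Qed.

End Arith.

End PartC.
Import PartC.

Module PartD.
Local Open Scope ring_scope.

Section Policy.
Variables (R : realType) (A : finType).

Definition Beat (d : {ffun A -> X A}) (a b : A) : bool :=
  if a == b then true
  else if (d a).1 && ~~ (d b).1 then true
  else if (d b).1 && ~~ (d a).1 then false
  else Dx a b (d a) (d b).

Definition Bt d (x y : option A) : bool :=
  match x, y with
  | Some a, Some b => Beat d a b
  | Some a, None => (d a).1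
  | None, Some b => ~~ (d b).1
  | None, None => true
  end.

Definition Mp d : agent -> option A -> option A -> R :=
  fun i x y => if i is Ag1 then (Bt d x y)%:R else 1 - (Bt d x y)%:R.

Lemma Mp_policy d : is_policy (Mp d).
Proof.
split; last by move=> a1 a2 /=; rewrite addrC subrK.
by move=> [] a1 a2 /=; case: (Bt d a1 a2); rewrite /= ?subrr ?subr0 ?lexx ?ler01.
Qed.

Lemma Dx_anti a b (xa xb : X A) : a != b -> Dx b a xb xa = ~~ Dx a b xa xb.
Proof.
move=> ab; have : rk a != rk b.
  by apply: contra ab => /eqP /val_inj /enum_rank_inj ->.
rewrite /Dx; case: ltngtP => // _ _; case: (xa.2 b); case: (xb.2 a) => //.
Qed.

Lemma in_optset (L : {set A}) b : (Some b \in Some @: L :|: [set None]) = (b \in L).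
Proof.
rewrite !inE orbF mem_imset //; exact: Some_inj.
Qed.

Lemma None_optset (L : {set A}) : None \in Some @: L :|: [set None].
Proof. by rewrite !inE eqxx orbT. Qed.

Lemma negbTE' (a b : A) : b != a -> a != b.
Proof. by rewrite eq_sym. Qed.

Lemma good_terms (W L : {set A}) (d : {ffun A -> X A}) a : a \in W -> a \notin L -> Gx L a (d a) d ->
  game_value (Mp d) Ag1 (Some @: L :|: [set None]) (Some @: W :|: [set None]) <= 0 /\
  game_value (Mp d) Ag2 (Some @: W :|: [set None]) (Some @: L :|: [set None]) <= 0.
Proof.
move=> aW aL /andP[ea /forallP HG]; split.
- apply: (gv1_le0 (a := Some a)) (Mp_policy d) (None_optset _) _ _.
    by rewrite in_optset.
  case=> [b|] //=; last by rewrite ea.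
  rewrite in_optset => bL; have ba : b != a by apply: contraNneq aL => <-.
  rewrite /Beat (negPf ba) ea /= andbF.
  have := HG b; rewrite bL /=; case: (d b).1 => //= Dab.
  by rewrite (Dx_anti (d a) (d b) (negbTE' ba)) Dab.
- apply: (gv2_le0 (a := Some a)) (Mp_policy d) (None_optset _) _ _.
    by rewrite in_optset.
  case=> [b|] //=; last by rewrite ea subrr.
  rewrite in_optset => bL; have ab : a != b by apply: contraNneq aL => ->.
  rewrite /Beat (negPf ab) ea /=.
  have := HG b; rewrite bL /=; case: (d b).1 => //= Dab.
    by rewrite Dab subrr.
  by rewrite subrr.
Qed.

End Policy.

End PartD.
Import PartD.

Module PartE.
Local Open Scope ring_scope.

Lemma exists_le_avg (R : realType) (T : finType) (w f : T -> R) :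
  (forall t, 0 <= w t) -> \sum_t w t = 1 -> exists t, f t <= \sum_t w t * f t.
Proof.
move=> w0 w1.
case: (pickP (fun _ : T => true)) => [t0 _|h]; last first.
  by move: w1; rewrite big_pred0 // => /eqP; rewrite eq_sym oner_eq0.
case: (@arg_minP _ _ _ t0 (fun _ => true) f isT) => t _ Ht.
exists t; apply: (@le_trans _ _ (\sum_t0 w t0 * f t)).
  by rewrite -mulr_suml w1 mul1r.
by apply: ler_sum => u _; apply: ler_wpM2l => //; exact: Ht.
Qed.

Section Main.
Variables (R : realType) (A S : finType) (P : S -> R) (Cw Cl : S -> {set A}).

Definition Phi (d : {ffun A -> X A}) (s : S) : R :=
  \prod_(a in Cw s :\: Cl s) (1 - (Gx (Cl s) a (d a) d)%:R).

Lemma Phi_ge0 d s : 0 <= Phi d s.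
Proof. by apply: prodr_ge0 => a _; case: (Gx _ _ _ _); rewrite ?subrr ?subr0. Qed.

Lemma wval_bound d s :
  wval Cw Cl (Mp R d) Ag1 Ag2 s <= Phi d s /\ wval Cw Cl (Mp R d) Ag2 Ag1 s <= Phi d s.
Proof.
rewrite /wval /=.
case: (boolP [exists a in Cw s :\: Cl s, Gx (Cl s) a (d a) d]).
- case/existsP => a /andP[]; rewrite inE => /andP[aL aW] G.
  have [h1 h2] := good_terms R aW aL G.
  by split; [apply: le_trans h1 (Phi_ge0 d s)|apply: le_trans h2 (Phi_ge0 d s)].
- move=> H0.
  have -> : Phi d s = 1.
    apply: big1 => a aW.
    have /negPf -> : ~~ Gx (Cl s) a (d a) d.
      by apply: contra H0 => G; apply/existsP; exists a; rewrite aW G.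
    by rewrite subr0.
  split; apply: gv_le1; first exact: Mp_policy.
  - exact: None_optset.
  - exact: None_optset.
  - exact: Mp_policy.
  - exact: None_optset.
  - exact: None_optset.
Qed.

Lemma error_le_Phi d : is_pmf P ->
  error P Cw Cl (Mp R d) <= \sum_s P s * Phi d s.
Proof.
move=> [P0 _]; apply: ler_sum => s _; apply: ler_wpM2l => //.
have [h1 h2] := wval_bound d s; lra.
Qed.

Lemma error_le1 d : is_pmf P -> error P Cw Cl (Mp R d) <= 1.
Proof.
move=> [P0 P1]; rewrite -P1; apply: ler_sum => s _.
rewrite -[X in _ <= X]mulr1; apply: ler_wpM2l => //.
have h1 := gv_le1 Ag1 (Mp_policy R d) (None_optset (Cl s)) (None_optset (Cw s)).
have h2 := gv_le1 Ag2 (Mp_policy R d) (None_optset (Cw s)) (None_optset (Cl s)).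
rewrite /wval /=; lra.
Qed.


Lemma main_game m n K : is_pmf P -> (0 < n)%N -> (forall s, #|Cl s| <= n)%N ->
  (forall s, m <= #|Cw s|)%N ->
  exists d : {ffun A -> X A}, (error P Cw Cl (Mp R d) <= 1) /\
   ((n * 16 ^ K + n <= m)%N -> error P Cw Cl (Mp R d) <= (expR 1 + 1) / 2 ^+ (K * K.+1)).
Proof.
move=> HP n0 hL hW.
set p : R := (n%:R * 2 ^+ K)^-1.
have nge1 : 1 <= (n%:R : R) by rewrite ler1n.
have hge1 : 1 <= (n%:R : R) * 2 ^+ K by rewrite mulr_ege1 // two_ge1.
have p0 : 0 <= p by rewrite invr_ge0; apply: le_trans hge1.
have p1 : p <= 1 by rewrite invf_le1 //; apply: lt_le_trans hge1.
have m0ge (x : X A) : 0 <= mu0 p x.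
  rewrite /mu0; apply: divr_ge0; last by apply: ltW; exact: two_gt0.
  by case: x.1 => //; lra.
have muge (d : {ffun A -> X A}) : 0 <= mu (mu0 p) d by apply: prodr_ge0.
have mu1 : \sum_(d : {ffun A -> X A}) mu (mu0 p) d = 1.
  have H := sum_mu_prod (mu0 p) (fun (_ : A) (_ : X A) => (1:R)).
  have e1 : \sum_(d : {ffun A -> X A}) mu (mu0 p) d = \sum_(d : {ffun A -> X A}) mu (mu0 p) d * \prod_(i : A) (fun (_ : A) (_ : X A) => (1:R)) i (d i).
    by apply: eq_bigr => d _; rewrite big1_eq mulr1.
  have e2 : \prod_(i : A) \sum_x mu0 p x * (fun (_ : A) (_ : X A) => (1:R)) i x = 1.
    apply: big1 => i _; rewrite -[RHS](@sum_mu0 R A p); apply: eq_bigr => x _.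
    by rewrite mulr1.
  by rewrite e1 H e2.
have [d Hd] := exists_le_avg (fun d => error P Cw Cl (Mp R d)) muge mu1.
exists d; split; first exact: error_le1.
move=> hm; apply: le_trans Hd _.
apply: (@le_trans _ _ (\sum_(d : {ffun A -> X A}) mu (mu0 p) d * \sum_s P s * Phi d s)).
  by apply: ler_sum => d' _; apply: ler_wpM2l => //; exact: error_le_Phi.
have -> : \sum_(d : {ffun A -> X A}) mu (mu0 p) d * \sum_s P s * Phi d s =
          \sum_s P s * \sum_(d : {ffun A -> X A}) mu (mu0 p) d * Phi d s.
  rewrite (eq_bigr (fun d => \sum_s mu (mu0 p) d * (P s * Phi d s))); last first.
    by move=> d' _; rewrite mulr_sumr.
  rewrite exchange_big /=; apply: eq_bigr => s _; rewrite mulr_sumr.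
  by apply: eq_bigr => d' _; rewrite mulrCA.
case: HP => P0 P1.
apply: (@le_trans _ _ (\sum_s P s * ((expR 1 + 1) / 2 ^+ (K * K.+1)))); last first.
  by rewrite -mulr_suml P1 mul1r.
apply: ler_sum => s _.
apply: ler_wpM2l => //.
have dWL : forall a, a \in Cw s :\: Cl s -> a \notin Cl s.
  by move=> a; rewrite inE => /andP[].
rewrite /Phi expect_prod //.
apply: (@le_trans _ _ (\sum_(d : {ffun A -> X A}) mu (mu0 p) d * ((2 ^+ K) ^+ #|LE (Cl s) d| / (2 ^+ K) ^+ K.+1
    + (1 - p / 2 ^+ K) ^+ #|Cw s :\: Cl s|))).
  apply: ler_sum => d' _; apply: ler_wpM2l => //.
  have := @pt_bound R p #|LE (Cl s) d'| K #|Cw s :\: Cl s|.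
  by rewrite p0 p1 => H; apply: H.
rewrite (eq_bigr (fun d => mu (mu0 p) d * (2 ^+ K) ^+ #|LE (Cl s) d| / (2 ^+ K) ^+ K.+1
    + (1 - p / 2 ^+ K) ^+ #|Cw s :\: Cl s| * mu (mu0 p) d)); last first.
  by move=> d' _; rewrite mulrDr mulrA; congr (_ + _); exact: mulrC.
rewrite big_split /= -mulr_suml -mulr_sumr mu1 mulr1 moment.
apply: (final_bound (m := m) (n := n)) => //.
have h1 := cardsD (Cw s) (Cl s).
have h2 : (#|Cw s :&: Cl s| <= #|Cl s|)%N by apply: subset_leq_card; exact: subsetIr.
have := hL s; have := hW s; move=> ? ?; lia.
Qed.
End Main.

End PartE.
Import PartE.

Module PartF.
Local Open Scope ring_scope.

Section Lim.
Variable R : realType.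
Definition Kf (r : R) : nat := trunc_log 16 (Num.truncn (r - 1)).
Definition fb (r : R) : R := Num.min 1 ((expR 1 + 1) / 2 ^+ (Kf r * (Kf r).+1)).

Lemma fb_ge0 r : 0 <= fb r.
Proof.
rewrite /fb le_min ler01 /=; apply: divr_ge0; last by apply: ltW; exact: two_gt0.
by apply: addr_ge0 => //; exact: ltW (expR_gt0 _).
Qed.

Lemma fb_le1 r : fb r <= 1.
Proof. by rewrite /fb ge_min lexx. Qed.

Lemma nat_gt (y : R) : exists K : nat, y <= K%:R.
Proof.
exists (Num.truncn y).+1; apply: ltW.
exact: truncnS_gt.
Qed.

Lemma pow2_ge (K : nat) : (K.+1%:R : R) <= 2 ^+ K.+1.
Proof.
rewrite -natrX ler_nat; elim: K => // K IH; rewrite expnS; lia.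
Qed.

Lemma tail_est (c eps : R) : 0 < c -> 0 < eps -> exists K0 : nat,
  forall K : nat, (K0 <= K)%N ->
  (expR (2 * c) ^+ 5) ^+ K.+1 * ((expR 1 + 1) / (2 ^+ K) ^+ K.+1) <= eps.
Proof.
move=> c0 e0.
set E5 := expR (2 * c) ^+ 5.
have [K1 hK1] := nat_gt (2 * E5).
have [K2 hK2] := nat_gt ((expR 1 + 1) / eps).
exists (maxn K1 K2) => K; rewrite geq_max => /andP[k1 k2].
have C0 : 0 < expR (1:R) + 1 by have := expR_gt0 (1:R); move=> ?; lra.
have E50 : 0 < E5 by rewrite exprn_gt0 ?expR_gt0.
have t0 : 0 < (2:R) ^+ K by exact: two_gt0.
have h2K : 2 * E5 <= 2 ^+ K.
  apply: (le_trans hK1); apply: (@le_trans _ _ K%:R); first by rewrite ler_nat.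
  case: K {k1 k2 t0} => // K; exact: pow2_ge.
set q := E5 / 2 ^+ K.
have q0 : 0 <= q by rewrite divr_ge0 // ltW.
have hq : q <= 2^-1.
  rewrite /q ler_pdivrMr //; lra.
have e1 : E5 ^+ K.+1 * ((expR 1 + 1) / (2 ^+ K) ^+ K.+1) = (expR 1 + 1) * q ^+ K.+1.
  by rewrite /q expr_div_n mulrA [_ * (expR 1 + 1)]mulrC -mulrA.
rewrite e1.
have hq2 : q ^+ K.+1 <= (2 ^+ K.+1)^-1.
  by rewrite -exprVn; apply: lerXn2r; rewrite ?nnegrE //.
have hK : (2 ^+ K.+1 : R)^-1 <= (K.+1%:R)^-1.
  by rewrite lef_pV2 ?posrE ?ltr0n ?exprn_gt0 // pow2_ge.
have hK2' : (expR (1:R) + 1) / eps <= K.+1%:R.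
  apply: (le_trans hK2); rewrite ler_nat; lia.
have : (expR (1:R) + 1) * (K.+1%:R)^-1 <= eps.
  by rewrite mulrC ler_pdivrMl ?ltr0n // -ler_pdivrMr.
move=> h; apply: le_trans h; rewrite ler_pM2l //; exact: le_trans hq2 hK.
Qed.

End Lim.

End PartF.
Import PartF.

Module PartG.
Local Open Scope ring_scope.
Local Open Scope classical_set_scope.

Section Lim2.
Variable R : realType.

Lemma fb_lim (c : R) : 0 < c -> (r `^ c * fb r) @[r --> +oo] --> 0.
Proof.
move=> c0; apply/cvgrPdist_le => eps e0.
have [K0 HK0] := tail_est c0 e0.
exists ((16 ^ K0)%:R + 2); split; first by rewrite num_real.
move=> r Hr.
rewrite sub0r normrN ger0_norm; last by rewrite mulr_ge0 ?powR_ge0 ?fb_ge0.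
have r0 : 0 < r by have := ler0n R (16 ^ K0); move=> ?; lra.
have r1 : 0 <= r - 1 by have := ler0n R (16 ^ K0); move=> ?; lra.
set t := Num.truncn (r - 1).
have ht : (16 ^ K0 <= t)%N by rewrite truncn_ge_nat //; lra.
have hK : (K0 <= Kf r)%N by apply: trunc_log_max.
set K := Kf r in hK *.
have hlt : (t < 16 ^ K.+1)%N by apply: trunc_log_ltn.
have rup : r <= 2 ^+ (4 * K + 5).
  have h1 : r - 1 < t.+1%:R by exact: truncnS_gt.
  have h2 : (t.+1%:R : R) <= (16 ^ K.+1)%:R by rewrite ler_nat.
  have h3 : (16 ^ K.+1)%:R + 1 <= (2:R) ^+ (4 * K + 5).
    rewrite -natrX -[(1:R)]/(1%:R) -natrD ler_nat.
    have -> : (2 ^ (4 * K + 5) = 2 * 16 ^ K.+1)%N.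
      by rewrite -[16%N]/(2 ^ 4)%N -expnM -expnS; congr (expn 2 _); lia.
    have : (0 < 16 ^ K.+1)%N by rewrite expn_gt0.
    lia.
  lra.
have hpow : r `^ c <= (expR (2 * c) ^+ 5) ^+ K.+1.
  rewrite /powR gt_eqF // -exprM -expRM_natl ler_expR.
  have hl : ln r <= 2 *+ (4 * K + 5).
    apply: (@le_trans _ _ (ln (2 ^+ (4 * K + 5)))).
      by rewrite ler_ln ?posrE ?two_gt0.
    rewrite lnXn // lerMn2r; apply/orP; right; apply: ltW; apply: ln_sublinear.
    by rewrite ltr0n.
  have hc : c * ln r <= c * (2 *+ (4 * K + 5)) by rewrite ler_pM2l.
  apply: (le_trans hc).
  have -> : c * (2 *+ (4 * K + 5)) = (4 * K + 5)%:R * (2 * c).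
    by rewrite mulrnAr -mulr_natl [c * 2]mulrC.
  apply: ler_wpM2r; first by rewrite mulr_ge0 // ltW.
  rewrite ler_nat; lia.
have hfb : fb r <= (expR 1 + 1) / (2 ^+ K) ^+ K.+1.
  by rewrite /fb -/K -exprM ge_min lexx orbT.
apply: le_trans (HK0 _ hK).
apply: ler_pM => //; [exact: powR_ge0 | exact: fb_ge0].
Qed.
End Lim2.

End PartG.
Import PartG.

Local Open Scope ring_scope.
Local Open Scope classical_set_scope.

Theorem corollary5p2 (R : realType) :
  exists f : R -> R,
    (forall r : R, 0 < r -> 0 <= f r <= 1) /\
    (forall c : R, 0 < c -> (r `^ c * f r) @[r --> +oo] --> 0) /\
    (forall (A S : finType) (P : S -> R) (Cw Cl : S -> {set A}) (m n : nat),
        is_pmf P -> (0 < m)%N -> (0 < n)%N ->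
        (forall s, #|Cl s| <= n)%N -> (forall s, m <= #|Cw s|)%N ->
        exists M : agent -> option A -> option A -> R,
          is_policy M /\ error P Cw Cl M <= f (m%:R / n%:R)).
Proof.
exists (@fb R); split; first by move=> r _; rewrite fb_ge0 fb_le1.
split; first by move=> c c0; exact: fb_lim.
move=> A S P Cw Cl m n HP m0 n0 hL hW.
set K := Kf (m%:R / n%:R : R).
have [d [d1 d2]] := @main_game R A S P Cw Cl m n K HP n0 hL hW.
exists (Mp R d); split; first exact: Mp_policy.
rewrite /fb -/K le_min d1 /=.
case: (posnP K) => [K0|Kpos].
- rewrite K0 /= expr0 divr1; apply: (le_trans d1).
  by have := expR_gt0 (1:R); move=> ?; lra.
- apply: d2.
  set t := Num.truncn (m%:R / n%:R - 1 : R).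
  have hKt : K = trunc_log 16 t by [].
  have t15 : (15 < t)%N.
    by move: Kpos; rewrite hKt trunc_log_gt0 /=.
  have h16 : (16 ^ K <= t)%N by rewrite hKt; apply: trunc_logP => //; lia.
  have x1 : (1 : R) <= m%:R / n%:R - 1 by rewrite -truncn_gt0 -/t; lia.
  have tle : (t%:R : R) <= m%:R / n%:R - 1 by rewrite truncn_le; lra.
  have h16R : ((16 ^ K)%:R : R) <= m%:R / n%:R - 1.
    by apply: le_trans tle; rewrite ler_nat.
  have nR : (0 : R) < n%:R by rewrite ltr0n.
  have : ((16 ^ K)%:R + 1) * n%:R <= (m%:R : R).
    by rewrite -ler_pdivlMr //; lra.
  rewrite -(ler_nat R) natrD natrM; lra.
Qed.
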